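(* For all positive integers $n$ and $K\ge 2$, $$\min_{n=n_1\ge n_2\ge\cdots\ge n_{K-1}\ge n_K\ge1}\left(\sum_{k=1}^{K-1}\frac{n\cdot n_k}{\sqrt{n_{k+1}}}+n_{K-1}\cdot n_K\right)=O(K)\cdot n^{1.5+\frac{1}{6(2^{K-1}-1)}},$$ where the minimum is over real numbers $n_1,\dots,n_K$ and the $O(\cdot)$ hides an absolute constant. *)

(* Defs.v *)
From Stdlib Require Export Reals.
Open Scope R_scope.

(* A sequence n_1, ..., n_K is represented by m : nat -> R, using indices 1..K. *)

Definition feasible (n : nat) (K : nat) (m : nat -> R) : Prop :=
  m 1%nat = INR n /\
  (forall k : nat, (1 <= k)%nat -> (k < K)%nat -> m (S k) <= m k) /\
  1 <= m K.

Definition objective (n : nat) (K : nat) (m : nat -> R) : R :=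
  sum_f 1 (K - 1) (fun k => INR n * m k / sqrt (m (S k)))
  + m (K - 1)%nat * m K.

(* Main.v *)
Require Import Defs.
From Stdlib Require Import Reals Lra Lia.
Open Scope R_scope.

Lemma term_eq x a b : 0 < x ->
  x * Rpower x a / sqrt (Rpower x b) = Rpower x (1 + a - b / 2).
Proof.
  intros Hx.
  assert (Hb : 0 < Rpower x b) by (unfold Rpower; apply exp_pos).
  rewrite <- Rpower_sqrt by exact Hb.
  rewrite Rpower_mult.
  replace (1 + a - b / 2) with (1 + (a + - (b * / 2))) by field.
  rewrite !Rpower_plus, Rpower_Ropp, Rpower_1 by exact Hx.
  unfold Rdiv; ring.
Qed.

Theorem claim3p6 :
  exists C : R, 0 < C /\
    forall n K : nat, (1 <= n)%nat -> (2 <= K)%nat ->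
      exists m : nat -> R,
        feasible n K m /\
        objective n K m <=
          C * INR K * Rpower (INR n) (3 / 2 + 1 / (6 * (2 ^ (K - 1) - 1))).
Proof.
  exists 1. split; [lra|].
  intros n K Hn HK.
  set (P := 2 ^ (K - 1)).
  assert (HP : 2 <= P).
  { unfold P. destruct K as [|[|j]]; [lia|lia|].
    replace (S (S j) - 1)%nat with (S j) by lia. simpl.
    assert (1 <= 2 ^ j) by (apply pow_R1_Rle; lra). lra. }
  set (d := 1 / (6 * (P - 1))).
  assert (Hd : 0 < d) by (unfold d; apply Rdiv_lt_0_compat; lra).
  assert (Hx : 1 <= INR n) by (apply (le_INR 1); exact Hn).
  assert (Hx0 : 0 < INR n) by lra.
  exists (fun k => Rpower (INR n) (1 + 2 * d - 2 ^ k * d)).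
  assert (Hterm : forall k, INR n * Rpower (INR n) (1 + 2 * d - 2 ^ k * d)
        / sqrt (Rpower (INR n) (1 + 2 * d - 2 ^ (S k) * d))
        = Rpower (INR n) (3/2 + d)).
  { intro k. rewrite term_eq by exact Hx0. f_equal. simpl. field. }
  split.
  - split; [|split].
    + simpl. replace (1 + 2 * d - 2 * 1 * d) with 1 by ring. apply Rpower_1; exact Hx0.
    + intros k _ _. apply Rle_Rpower; [exact Hx|]. simpl.
      assert (0 < 2 ^ k) by (apply pow_lt; lra). nra.
    + rewrite <- (Rpower_O (INR n)) at 1 by exact Hx0.
      apply Rle_Rpower; [exact Hx|].
      destruct K as [|[|j]]; [lia|lia|].
      replace (S (S j) - 1)%nat with (S j) in P by lia.
      change (2 ^ S (S j)) with (2 * P).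
      replace (1 + 2 * d - 2 * P * d) with (2/3) by (unfold d; field; lra). lra.
  - unfold objective, sum_f.
    rewrite (sum_eq _ (fun _ => Rpower (INR n) (3/2 + d))).
    2:{ intros i _. rewrite Nat.add_1_r. apply Hterm. }
    rewrite sum_cte.
    destruct K as [|[|j]]; [lia|lia|].
    replace (S (S j) - 1 - 1)%nat with j by lia.
    replace (S (S j) - 1)%nat with (S j) by lia.
    rewrite <- Rpower_plus.
    replace (1 + 2 * d - 2 ^ S j * d + (1 + 2 * d - 2 ^ S (S j) * d)) with (3/2 + d).
    2:{ change (2 ^ S (S j)) with (2 * 2 ^ S j).
        assert (EP : P = 2 ^ S j) by (unfold P; f_equal; lia).
        rewrite <- EP. unfold d. field. lra. }
    rewrite !S_INR. right. ring.
Qed.
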